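(* Let $X$ be the subshift obtained from the marker construction described in the context, and let $j \in \mathbb{N}$. If $x \in X$ and $x_{[0,l_j)}$ is a word in $\mathcal{C}_j$, then every $k>0$ with $x_{[k,k+l_j)} = x_{[0,l_j)}$ is a multiple of $l_j$. In particular the first return time $R_{l_j}(x) = \inf\{k>0 : x_{[k,k+l_j)} = x_{[0,l_j)}\}$ is a multiple of $l_j$.
   Context: Marker construction. Let $l_1$ be a sufficiently large perfect square and $N_1 = 2^{\sqrt{l_1}}$. Let $\mathcal{C}_1$ be a set of $N_1$ binary words of length $l_1$, each beginning with $001$, such that the word $00$ occurs in each element of $\mathcal{C}_1$ only as its prefix. Inductively, given a set $\mathcal{C}_j$ of $N_j$ distinct words of length $l_j$ with an ordering $\mathcal{C}_j = \{u_1^{(j)},\dots,u_{N_j}^{(j)}\}$, let $P_j = \{2\}\cup\{i^2 : 2 \le i \le \lfloor\sqrt{N_j}\rfloor\}$, and let $\mathcal{C}_{j+1}$ be the set of all words $u^{(j)}_{\pi(1)}u^{(j)}_{\pi(2)}\cdots u^{(j)}_{\pi(N_j)}$ where $\pi$ ranges over permutations of $\{1,\dots,N_j\}$ fixing every element outside $P_j$. Thus $N_{j+1} = (\lfloor\sqrt{N_j}\rfloor)!$ and $l_{j+1} = l_j N_j$. The ordering of $\mathcal{C}_{j+1}$ is arbitrary except that its first element $u^{(j+1)}_1$ is $u_1^{(j)}u_2^{(j)}\cdots u_{N_j}^{(j)}$ (identity permutation). Words $u_i^{(j)}$ with $i\in P_j$ are called permuted, the others unpermuted. $X \subset \{0,1\}^{\mathbb{Z}}$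 is the set of bi-infinite sequences each finite subword of which is a subword of some word in $\bigcup_j \mathcal{C}_j$; it is a strictly ergodic subshift. *)

(* Defs.v *)
From mathcomp Require Import all_boot all_order all_algebra all_fingroup.
Set Implicit Arguments. Unset Strict Implicit. Unset Printing Implicit Defensive.
Import GRing.Theory Num.Theory.

Definition subword (x : int -> bool) (a : int) (n : nat) : seq bool :=
  [seq x (a + (i%:Z))%R | i <- iota 0 n].

(* The index set P_j (1-based positions), given N = N_j:
   P = {2} U {i^2 : 2 <= i <= floor(sqrt N)}; note i <= floor(sqrt N) <-> i*i <= N. *)
Definition Pset (N : nat) (m : nat) : Prop :=
  m = 2 \/ exists i, 2 <= i /\ i * i <= N /\ m = i * i.

(* Words of C_{j+1} built from the ordering u = (u_1,...,u_N) of C_j: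
   u_{pi(1)} ... u_{pi(N)} for a permutation pi fixing every position outside P.
   Positions are 0-based in Rocq: ordinal i stands for the 1-based position i+1. *)
Definition next_level (u : seq (seq bool)) (w : seq bool) : Prop :=
  exists pi : {perm 'I_(size u)},
    (forall i : 'I_(size u), ~ Pset (size u) i.+1 -> pi i = i) /\
    w = flatten [seq nth [::] u (pi i) | i <- enum 'I_(size u)].

Definition only_prefix00 (w : seq bool) : Prop :=
  forall i, i.+1 < size w -> nth true w i = false -> nth true w i.+1 = false -> i = 0.

(* [ord j] is the chosen ordering (u_1^{(j)}, ..., u_{N_j}^{(j)}) of C_j, for j >= 1
   (ord 0 is irrelevant).  [marker_construction l1 ord] says that ord is a valid
   run of the marker construction starting from l_1 = l1. *)
Definition marker_construction (l1 : nat) (ord : nat -> seq (seq bool)) : Prop :=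
  (exists s, l1 = s * s /\ size (ord 1) = 2 ^ s) /\
  uniq (ord 1) /\
  (forall w, w \in ord 1 ->
     size w = l1 /\ take 3 w = [:: false; false; true] /\ only_prefix00 w) /\
  (forall j, 1 <= j ->
     uniq (ord j.+1) /\
     (forall w, w \in ord j.+1 <-> next_level (ord j) w) /\
     head [::] (ord j.+1) = flatten (ord j)).

(* The lengths l_j: l_1 = l1, l_{j+1} = l_j * N_j  (value at j = 0 irrelevant). *)
Fixpoint wlen (l1 : nat) (ord : nat -> seq (seq bool)) (j : nat) : nat :=
  match j with
  | 0 => l1
  | 1 => l1
  | j'.+1 => wlen l1 ord j' * size (ord j')
  end.

Definition in_X (ord : nat -> seq (seq bool)) (x : int -> bool) : Prop :=
  forall (a : int) (n : nat),
    exists j, 1 <= j /\ exists w, w \in ord j /\ infix (subword x a n) w.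

(* Main.v *)
Require Import Defs.
From mathcomp Require Import all_boot all_order all_algebra all_fingroup.
From mathcomp Require Import zify.
Set Implicit Arguments. Unset Strict Implicit.

Definition blocks (S cs : seq (seq bool)) := forall c, c \in cs -> c \in S.

Lemma take_le (T : Type) (i j : nat) (s : seq T) : i <= j -> take i (take j s) = take i s.
Proof. by move=> h; rewrite -take_min (minn_idPl h). Qed.

Lemma size_flatten_const (ss : seq (seq bool)) c :
  (forall s, s \in ss -> size s = c) -> size (flatten ss) = size ss * c.
Proof.
elim: ss => [|s ss IH] h //=.
rewrite size_cat h ?mem_head // IH ?mulSn //.
  by move=> t ht; apply: h; rewrite inE ht orbT.
Qed.

Lemma take_drop_flatten (ss : seq (seq bool)) c q :
  (forall s, s \in ss -> size s = c) -> q < size ss ->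
  take c (drop (q * c) (flatten ss)) = nth [::] ss q.
Proof.
elim: ss q => [|s ss IH] q h //= hq.
have hs : size s = c by apply: h; rewrite mem_head.
case: q hq => [|q] hq /=.
  by rewrite mul0n drop0 take_size_cat.
rewrite mulSn drop_cat hs ltnNge leq_addr /= addKn IH //.
by move=> t ht; apply: h; rewrite inE ht orbT.
Qed.

Lemma mem_infix_flatten (w : seq bool) (s : seq (seq bool)) :
  w \in s -> infix w (flatten s).
Proof.
elim: s => [|a s IH] //=; rewrite inE => /orP [/eqP ->|h].
  by apply/infixP; exists [::], (flatten s).
apply: (infix_trans (IH h)); apply/infixP; exists a, [::]; by rewrite cats0.
Qed.

Lemma subword_split x (a : int) n m :
  subword x a (n + m) = subword x a n ++ subword x (a + n%:Z)%R m.
Proof.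
rewrite /subword iotaD map_cat; congr (_ ++ _).
rewrite add0n -[n]addn0 iotaDl -map_comp; apply: eq_map => i /=.
by rewrite addn0 PoszD GRing.addrA.
Qed.

Lemma size_subword x a n : size (subword x a n) = n.
Proof. by rewrite /subword size_map size_iota. Qed.
Lemma next_level_blocks (u : seq (seq bool)) w :
  uniq u -> 0 < size u -> next_level u w ->
  exists ds, w = flatten ds /\ blocks u ds /\ size ds = size u /\
    forall m, m < size ds -> (nth [::] ds m == head [::] u) = (m == 0).
Proof.
move=> Hu Hn [pi [Hfix ->]].
exists [seq nth [::] u (pi i) | i <- enum 'I_(size u)]; split; first done.
split.
  move=> c /mapP [i _ ->]; apply: mem_nth; exact: ltn_ord.
split; first by rewrite size_map size_enum_ord.
move=> m; rewrite size_map size_enum_ord => hm.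
set z := Ordinal Hn.
rewrite (nth_map z) ?size_enum_ord //.
have hk := nth_enum_ord z hm.
set k := nth z (enum 'I_(size u)) m in hk *.
rewrite -nth0 nth_uniq ?ltn_ord //.
have hz : pi z = z.
  apply: Hfix; rewrite /Pset /= => [[h|[i [h2 [_ h]]]]] //; nia.
have -> : (val (pi k) == 0) = (pi k == z) by [].
rewrite -{1}hz (inj_eq perm_inj) -hk.
by [].
Qed.

Section MC.
End MC.

Lemma mc_uniq l1 ord : marker_construction l1 ord -> forall i, 1 <= i -> uniq (ord i).
Proof.
move=> [_ [hu1 [_ hst]]] [|[|i]] // _; exact: (hst i.+1 isT).1.
Qed.

Lemma mc_next l1 ord : marker_construction l1 ord -> forall i, 1 <= i ->
  forall w, w \in ord i.+1 -> next_level (ord i) w.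
Proof. by move=> [_ [_ [_ hst]]] i hi w hw; apply/(hst i hi).2.1. Qed.

Lemma mc_head l1 ord : marker_construction l1 ord -> forall i, 1 <= i ->
  head [::] (ord i.+1) = flatten (ord i).
Proof. by move=> [_ [_ [_ hst]]] i hi; exact: (hst i hi).2.2. Qed.

Lemma wlenS l1 ord i : 1 <= i -> wlen l1 ord i.+1 = wlen l1 ord i * size (ord i).
Proof. by case: i. Qed.

Lemma mc_l1 l1 ord : marker_construction l1 ord -> 3 <= l1.
Proof.
move=> [[s [_ hs]] [_ [hw _]]].
have hn : 0 < size (ord 1) by rewrite hs expn_gt0.
have [hsz [ht _]] := hw _ (mem_nth [::] hn).
have := congr1 size ht; rewrite size_take_min /= hsz; lia.
Qed.

Lemma mc_pos l1 ord : marker_construction l1 ord -> forall i, 1 <= i ->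
  [/\ 0 < size (ord i), 0 < wlen l1 ord i &
      forall w, w \in ord i -> size w = wlen l1 ord i].
Proof.
move=> H; have hl := mc_l1 H.
elim=> [//|i IH] hi.
case: i IH hi => [|i] IH hi.
  move: H => [[s [_ hs]] [_ [hw _]]]; split => //=.
  - by rewrite hs expn_gt0.
  - lia.
  - by move=> w /hw [].
have hi1 : 0 < i.+1 by [].
have [hp hw hsz] := IH hi1.
have hsz' : forall w, w \in ord i.+2 -> size w = wlen l1 ord i.+2.
  move=> w /(mc_next H hi1) /(next_level_blocks (mc_uniq H hi1) hp).
  move=> [ds [-> [hb [hsd _]]]].
  rewrite (size_flatten_const (c := wlen l1 ord i.+1)).
    by rewrite hsd mulnC.
  by move=> c /hb /hsz.
split => //.
- case E : (ord i.+2) => [|a t] //.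
  have := mc_head H hi1; rewrite E /= => /(congr1 size).
  rewrite (size_flatten_const (c := wlen l1 ord i.+1)) //= => h0.
  have : 0 < size (ord i.+1) * wlen l1 ord i.+1 by rewrite muln_gt0 hp hw.
  by rewrite -h0.
- by rewrite wlenS // muln_gt0 hp hw.
Qed.
Lemma expand l1 ord : marker_construction l1 ord -> forall i, 1 <= i ->
  forall cs, blocks (ord i.+1) cs -> exists D, flatten D = flatten cs /\
    blocks (ord i) D /\ size D = size cs * size (ord i) /\
    forall m, m < size D -> (nth [::] D m == head [::] (ord i)) = (size (ord i) %| m).
Proof.
move=> H i hi; have [hp _ _] := mc_pos H hi.
elim=> [|c cs IH] hb.
  by exists [::]; split => //; split => //.
have [ds [hc [hbd [hsd hnd]]]] := next_level_blocks (mc_uniq H hi) hp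
  (mc_next H hi (hb c (mem_head _ _))).
have [D [hD [hbD [hsD hnD]]]] : exists D, flatten D = flatten cs /\
    blocks (ord i) D /\ size D = size cs * size (ord i) /\
    forall m, m < size D -> (nth [::] D m == head [::] (ord i)) = (size (ord i) %| m).
  by apply: IH => d hd; apply: hb; rewrite inE hd orbT.
exists (ds ++ D); split; first by rewrite flatten_cat hD hc.
split; first by move=> d; rewrite mem_cat => /orP [/hbd|/hbD].
split; first by rewrite size_cat hsd hsD mulSn.
move=> m; rewrite size_cat nth_cat => hm.
case: ltnP => hm'.
  rewrite hnd //; case: m hm hm' => [|m] hm hm'; first by rewrite dvdn0.
  by rewrite gtnNdvd // -hsd.
rewrite hnD; last by lia.
by rewrite -{2}(subnK hm') hsd dvdn_addl.
Qed.

Lemma R1 l1 ord : marker_construction l1 ord -> forall cs, blocks (ord 1) cs ->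
  forall p, take 3 (drop p (flatten cs)) = [:: false; false; true] -> l1 %| p.
Proof.
move=> H; have hl := mc_l1 H.
have hw1 : forall w, w \in ord 1 ->
     size w = l1 /\ take 3 w = [:: false; false; true] /\ only_prefix00 w.
  by case: H => _ [_ [hw _]].
elim=> [|c cs IH] hb p ht; first by case: p ht.
have [hsz [h3 h00]] := hw1 c (hb c (mem_head _ _)).
have hn : forall n, n < 3 -> nth true (c ++ flatten cs) (p + n) =
     nth true [:: false; false; true] n.
  by move=> n hn; rewrite -ht nth_take // nth_drop.
case: (ltnP p l1) => hp.
  case: (ltnP p.+1 l1) => hp1.
    have := h00 p; rewrite hsz => /(_ hp1).
    have := hn 0 isT; have := hn 1 isT.
    rewrite addn0 addn1 !nth_cat hsz hp hp1 /= => -> -> /(_ erefl erefl) ->.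
    by rewrite dvdn0.
  have ep : p.+1 = l1 by lia.
  have := hn 1 isT; have := hn 2 isT.
  rewrite !nth_cat hsz addn1 addn2 ep ltnn ltnNge leqnSn /= subnn.
  rewrite -ep subSnn.
  case: cs IH hb {ht hn} => [|c' cs] _ hb //= h1 h2.
  have hc' : c' \in c :: c' :: cs by rewrite inE mem_head orbT.
  have [hsz' [h3' _]] := hw1 c' (hb c' hc').
  have h1l : 1 < l1 by lia.
  move: h1 h2; rewrite !nth_cat hsz' h1l.
  have : nth true (take 3 c') 1 = false by rewrite h3'.
  by rewrite nth_take // => ->.
have hb' : blocks (ord 1) cs by move=> d hd; apply: hb; rewrite inE hd orbT.
have := ht; rewrite drop_cat hsz ltnNge hp /= => /(IH hb').
by rewrite -{2}(subnK hp) dvdn_addl.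
Qed.
Lemma Ri l1 ord : marker_construction l1 ord -> forall i, 1 <= i ->
  forall cs, blocks (ord i) cs -> forall p,
  take (wlen l1 ord i) (drop p (flatten cs)) \in ord i -> wlen l1 ord i %| p.
Proof.
move=> H; have hl := mc_l1 H.
elim=> [//|i IH] hi.
case: i IH hi => [|i] IH hi.
  move=> cs hb p hv; apply: (R1 H hb).
  have hw1 : forall w, w \in ord 1 ->
     size w = l1 /\ take 3 w = [:: false; false; true] /\ only_prefix00 w.
    by case: H => _ [_ [hw _]].
  have [_ [h3 _]] := hw1 _ hv.
  by rewrite -h3 take_le.
have hi1 : 0 < i.+1 by [].
move=> cs hb p hv.
have [hp hw hsz] := mc_pos H hi1.
have [hp2 hw2 hsz2] := mc_pos H hi.
set c := wlen l1 ord i.+1 in hw hsz IH *.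
set N := size (ord i.+1) in hp.
have [D [hD [hbD [hsD hnth]]]] := expand H hi1 hb.
rewrite -hD in hv.
set V := take (wlen l1 ord i.+2) (drop p (flatten D)) in hv.
have hbV : blocks (ord i.+2) [:: V] by move=> d; rewrite mem_seq1 => /eqP ->.
have [D' [hD' [hbD' [hsD' hnth']]]] := expand H hi1 hbV.
have hsD'0 : 0 < size D' by rewrite hsD' mul1n.
have hD'0 := hnth' 0 hsD'0; rewrite dvdn0 in hD'0.
have hcs : forall s, s \in D -> size s = c by move=> s /hbD /hsz.
have hcs' : forall s, s \in D' -> size s = c by move=> s /hbD' /hsz.
have hu1 : head [::] (ord i.+1) \in ord i.+1 by rewrite -nth0 mem_nth.
have hcle : c <= wlen l1 ord i.+2 by rewrite wlenS // leq_pmulr.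
have hfirst : take c (drop p (flatten D)) = head [::] (ord i.+1).
  rewrite -(take_le _ hcle) -/V.
  have := take_drop_flatten hcs' hsD'0; rewrite mul0n drop0 hD' /= cats0 => ->.
  exact/eqP.
have : c %| p by apply: (IH hi1 D hbD); rewrite hfirst.
move=> /dvdnP [m hm].
have hszV : size V = wlen l1 ord i.+2 by apply: hsz2.
have hmD : m < size D.
  have : size V <= size (drop p (flatten D)) by rewrite size_take_min geq_minr.
  rewrite size_drop (size_flatten_const hcs) hszV hm -mulnBl.
  move=> h; have : 0 < (size D - m) * c by apply: leq_trans h.
  rewrite muln_gt0 => /andP [h1 _]; lia.
have := hnth m hmD.
rewrite -(take_drop_flatten hcs hmD) -hm hfirst eqxx => /esym /dvdnP [k hk].
by rewrite hm hk wlenS // -/c -/N -mulnA [N * c]mulnC dvdn_mull.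
Qed.

Lemma lift l1 ord : marker_construction l1 ord -> forall n j, 1 <= j ->
  forall (v w : seq bool), w \in ord j -> infix v w ->
  exists w', w' \in ord (j + n) /\ infix v w'.
Proof.
move=> H; elim=> [|n IH] j hj v w hw hi; first by exists w; rewrite addn0.
have [w1 [hw1 hi1]] := IH j hj v w hw hi.
have hjn : 1 <= j + n by lia.
have [hp _ _] := mc_pos H (isT : 0 < (j + n).+1).
exists (head [::] (ord (j + n).+1)); split; first by rewrite addnS -nth0 mem_nth.
rewrite (mc_head H hjn); apply: (infix_trans hi1); exact: mem_infix_flatten.
Qed.

Lemma down l1 ord : marker_construction l1 ord -> forall n j, 1 <= j ->
  forall cs, blocks (ord (j + n)) cs ->
  exists es, blocks (ord j) es /\ flatten es = flatten cs.
Proof.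
move=> H; elim=> [|n IH] j hj cs hb; first by exists cs; rewrite addn0 in hb.
have hjn : 1 <= j + n by lia.
rewrite addnS in hb.
have [D [hD [hbD _]]] := expand H hjn hb.
have [es [hes hf]] := IH j hj D hbD.
by exists es; rewrite hf hD.
Qed.

Theorem lemma4p1 :
  exists L : nat, forall (l1 : nat) (ord : nat -> seq (seq bool)),
    L <= l1 -> marker_construction l1 ord ->
    forall (j : nat), 1 <= j ->
    forall x : int -> bool, in_X ord x ->
      subword x 0 (wlen l1 ord j) \in ord j ->
      forall k : nat, 0 < k ->
        subword x k%:Z (wlen l1 ord j) = subword x 0 (wlen l1 ord j) ->
        wlen l1 ord j %| k.
Proof.
exists 0 => l1 ord _ H j hj x hx h0 k hk hkeq.
set l := wlen l1 ord j in h0 hkeq *.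
have [j' [hj' [w [hw hinf]]]] := hx 0%R (k + l).
have [w' [hw' hinf']] := lift H j hj' hw hinf.
rewrite addnC in hw'.
have hb1 : blocks (ord (j + j')) [:: w'] by move=> d; rewrite mem_seq1 => /eqP ->.
have [es [hbes hfes]] := down H hj hb1.
rewrite /= cats0 in hfes.
have [s [s' hw's]] := infixP hinf'.
have hA : take l (drop (size s) (flatten es)) = subword x 0 l.
  rewrite hfes hw's drop_size_cat // addnC subword_split -catA take_size_cat //.
  by rewrite size_subword.
have hB : take l (drop (k + size s) (flatten es)) = subword x 0 l.
  rewrite -drop_drop hfes hw's drop_size_cat // subword_split GRing.add0r.
  rewrite -catA drop_size_cat ?size_subword // take_size_cat ?size_subword //.
have hA' : take l (drop (size s) (flatten es)) \in ord j by rewrite hA.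
have hB' : take l (drop (k + size s) (flatten es)) \in ord j by rewrite hB.
have d1 := Ri H hj hbes hA'.
have := Ri H hj hbes hB'.
by rewrite dvdn_addl.
Qed.
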